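(* Let $n_z\ge 2$ and let $\underline Z=\{Z_j: j=1,\dots,n_z\}$ be a set of real numbers with $0\in\underline Z$. Then the hybrid knowledge gradient satisfies $\mathrm{KG}_h(x)\ge 0$ for all $x\in X$, and if $x$ is sampled infinitely often then $\mathrm{KG}_h(x)=0$ (in the limit as the number of samples at $x$ tends to infinity).
   Context: Global optimization setting: an unknown function $f:X\to\mathbb{R}$ is observed with independent Gaussian noise of variance $\sigma_0^2>0$. After $n$ observations, a Gaussian process model has posterior mean $\mu^n$ and posterior covariance $k^n$. For a candidate sample location $x^{n+1}$ define $\tilde\sigma(x';x^{n+1})=k^n(x',x^{n+1})/\sqrt{k^n(x^{n+1},x^{n+1})+\sigma_0^2}$, so that the posterior mean after observing $y^{n+1}$ at $x^{n+1}$ is $\mu^{n+1}(x')=\mu^n(x')+\tilde\sigma(x';x^{n+1})Z$ with $Z\sim\mathcal N(0,1)$. Hybrid knowledge gradient: given fixed values $Z_1,\dots,Z_{n_z}$, for each $j$ let $x^*_j\in\operatorname{arg\,max}_{x'\in X}\big(\mu^n(x')+\tilde\sigma(x';x^{n+1})Z_j\big)$ and let $X^*_d=\{x^*_1,\dots,x^*_{n_z}\}$. With $\underline\mu^*=\mu^n(X^*_d)\in\mathbb{R}^{n_z}$ and $\underline{\tilde\sigma}^*(x^{n+1})=\tilde\sigma(X^*_d;x^{n+1})\in\mathbb{R}^{n_z}$ (componentwise), $$\mathrm{KG}_h(x^{n+1})=\mathbb{E}_{Z\sim\mathcal N(0,1)}\Big[\max_{j}\big(\underline\mu^*_j+\underline{\tilde\sigma}^*_j(x^{n+1})Z\big)\Big]-\max_j\underline\mu^*_j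 .$$ *)

(* Defs.v *)
From HB Require Import structures.
From mathcomp Require Import all_boot all_order all_algebra.
From mathcomp Require Import all_classical all_reals all_analysis.
Set Implicit Arguments. Unset Strict Implicit. Unset Printing Implicit Defensive.
Import Order.TTheory GRing.Theory Num.Theory.
Local Open Scope ring_scope.

Section GP.
Context {R : realType} {X : Type}.

Definition sigt (k : X -> X -> R) (s0 : R) (xn1 : X) (x' : X) : R :=
  k x' xn1 / Num.sqrt (k xn1 xn1 + s0 ^+ 2).

Definition gp_update (s0 : R) (mk : (X -> R) * (X -> X -> R)) (xo : X) (y : R)
  : (X -> R) * (X -> X -> R) :=
  let: (m, k) := mk in
  (fun a => m a + k a xo * (y - m xo) / (k xo xo + s0 ^+ 2),
   fun a b => k a b - k a xo * k xo b / (k xo xo + s0 ^+ 2)).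

(* posterior (mu^n, k^n) after the n observations (xs 0, ys 0), ..., (xs n.-1, ys n.-1) *)
Fixpoint gp_post (mu0 : X -> R) (k0 : X -> X -> R) (s0 : R)
  (xs : nat -> X) (ys : nat -> R) (n : nat) : (X -> R) * (X -> X -> R) :=
  match n with
  | 0 => (mu0, k0)
  | n'.+1 => gp_update s0 (gp_post mu0 k0 s0 xs ys n') (xs n') (ys n')
  end.

Definition is_argmax (mu : X -> R) (k : X -> X -> R) (s0 : R) (xn1 : X) (z : R)
  (x' : X) : Prop :=
  forall y : X, mu y + sigt k s0 xn1 y * z <= mu x' + sigt k s0 xn1 x' * z.

(* Hybrid knowledge gradient, given the discretized maximizers xstar : 'I_nz -> X
   (xstar j a maximizer for Z_j). Expectation w.r.t. Z ~ N(0,1). *)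
Definition KGh (nz : nat) (mu : X -> R) (k : X -> X -> R) (s0 : R)
  (xstar : 'I_nz -> X) (xn1 : X) : \bar R :=
  ((\int[normal_prob 0 1]_(z in [set: R])
      \big[Order.max/-oo]_(j < nz) (mu (xstar j) + sigt k s0 xn1 (xstar j) * z)%:E)
   - \big[Order.max/-oo]_(j < nz) (mu (xstar j))%:E)%E.

Definition psd_kernel (k : X -> X -> R) : Prop :=
  (forall a b, k a b = k b a) /\
  forall (m : nat) (p : 'I_m -> X) (c : 'I_m -> R),
    0 <= \sum_(i < m) \sum_(j < m) c i * c j * k (p i) (p j).

End GP.

(* Main.v *)
Require Import Defs.
From HB Require Import structures.
From mathcomp Require Import all_boot all_order all_algebra.
From mathcomp Require Import all_classical all_reals all_analysis measurable_realfun.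
From mathcomp Require Import ring lra.
Import Order.TTheory GRing.Theory Num.Theory.
Import numFieldNormedType.Exports.
Local Open Scope ring_scope.
Local Open Scope classical_set_scope.
Set Implicit Arguments. Unset Strict Implicit. Unset Printing Implicit Defensive.

Section Ker.
Context {R : realType} {X : Type}.
Implicit Types (k : X -> X -> R).

Lemma psd_diag k a : psd_kernel k -> 0 <= k a a.
Proof.
move=> [_ H]; have := H 1%N (fun=> a) (fun=> 1).
by rewrite !big_ord1 !mul1r.
Qed.

Lemma psd_two k a b (u v : R) : psd_kernel k ->
  0 <= u * u * k a a + u * v * k a b + v * u * k b a + v * v * k b b.
Proof.
move=> [_ H]; have := H 2%N (fun i => if i == ord0 then a else b)
   (fun i => if i == ord0 then u else v).
by rewrite !big_ord_recr /= !big_ord0 !add0r /= !addrA.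
Qed.

Lemma psd_cs k a b : psd_kernel k -> k a b ^+ 2 <= k a a * k b b.
Proof.
move=> hk; have sym := hk.1 b a.
have ha := psd_diag a hk; have hb := psd_diag b hk.
have h1 := psd_two a b (k b b) (- k a b) hk.
have h2 := psd_two a b (k a b) (- ((k a a + 1) / 2)) hk.
rewrite sym in h1 h2.
have [hb0|hbp] := eqVneq (k b b) 0.
  rewrite hb0 mulr0; move: h2; rewrite hb0. set t := (k a a + 1) / 2.
  have -> : t = (k a a + 1) / 2 by [].
  move=> h2. nra.
have hbp' : 0 < k b b by rewrite lt_neqAle eq_sym hbp hb.
nra.
Qed.

Lemma psd_update k (s0 : R) (m0 : X -> R) o y : 0 < s0 -> psd_kernel k ->
  psd_kernel (gp_update s0 (m0, k) o y).2.
Proof.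
move=> s0p hk; have [sym H] := hk; rewrite /=; split.
  by move=> a b; rewrite sym (sym a o) (sym o b) (mulrC (k o a)).
move=> m p c.
set d := k o o + s0 ^+ 2.
have koo := psd_diag o hk.
have dp : 0 < d by rewrite /d; apply: ltr_wpDl => //; exact: exprn_gt0.
set L := \sum_(i < m) c i * k (p i) o.
set Q := \sum_(i < m) \sum_(j < m) c i * c j * k (p i) (p j).
have E : \sum_(i < m) \sum_(j < m) c i * c j * (k (p i) (p j) - k (p i) o * k o (p j) / d)
   = Q - L * L / d.
  rewrite /Q {2}/L !mulr_suml -sumrB; apply: eq_bigr => i _.
  rewrite /L mulr_sumr mulr_suml -sumrB; apply: eq_bigr => j _.
  rewrite (sym o (p j)); field; exact: lt0r_neq0.
rewrite E.
pose t := - L / d.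
pose p' := fun i : 'I_m.+1 => if unlift ord_max i is Some j then p j else o.
pose c' := fun i : 'I_m.+1 => if unlift ord_max i is Some j then c j else t.
have Hw : forall i : 'I_m, widen_ord (leqnSn m) i = lift ord_max i.
  by move=> i; apply: val_inj; rewrite /= /bump leqNgt ltn_ord.
have pw : forall i : 'I_m, p' (widen_ord (leqnSn m) i) = p i.
  by move=> i; rewrite Hw /p' liftK.
have cw : forall i : 'I_m, c' (widen_ord (leqnSn m) i) = c i.
  by move=> i; rewrite Hw /c' liftK.
have pm : p' ord_max = o by rewrite /p' unlift_none.
have cm : c' ord_max = t by rewrite /c' unlift_none.
have := H m.+1 p' c'.
rewrite big_ord_recr /=.
under eq_bigr => i _ do rewrite big_ord_recr /=.
rewrite big_ord_recr /= big_split /=.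
under eq_bigr => i _ do (under eq_bigr => j _ do rewrite !pw !cw).
under [X in _ + X + _]eq_bigr => i _ do rewrite !pw !cw pm cm.
under [X in _ + (X + _)]eq_bigr => i _ do rewrite !pw !cw pm cm.
rewrite pm cm -/Q.
have -> : \sum_(i < m) c i * t * k (p i) o = t * L.
  by rewrite /L mulr_sumr; apply: eq_bigr => i _; ring.
have -> : \sum_(i < m) t * c i * k o (p i) = t * L.
  by rewrite /L mulr_sumr; apply: eq_bigr => i _; rewrite (sym o); ring.
rewrite /t => h.
have hd : k o o <= d by rewrite /d lerDl sqr_ge0.
have dn : d != 0 by exact: lt0r_neq0.
set u := k o o / d.
have hu : u <= 1 by rewrite /u ler_pdivrMr // mul1r.
have ek : k o o = u * d by rewrite /u mulfVK.
rewrite ek in h.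
have ef : - L / d = - (L / d) by rewrite mulNr.
rewrite ef in h.
set w := L / d in h.
have eL : L = w * d by rewrite /w mulfVK.
rewrite eL -mulrA mulfK //.
rewrite eL in h.
nra.
Qed.

Variables (mu0 : X -> R) (k0 : X -> X -> R) (s0 : R) (xs : nat -> X) (ys : nat -> R).
Hypothesis s0p : 0 < s0.
Hypothesis hk0 : psd_kernel k0.
Local Notation kn n := (gp_post mu0 k0 s0 xs ys n).2.

Lemma kn_S n a b : kn n.+1 a b =
  kn n a b - kn n a (xs n) * kn n (xs n) b / (kn n (xs n) (xs n) + s0 ^+ 2).
Proof. by rewrite /=; case: (gp_post mu0 k0 s0 xs ys n). Qed.

Lemma post_psd n : psd_kernel (kn n).
Proof.
elim: n => [//|n IH] /=.
move: IH; case: (gp_post mu0 k0 s0 xs ys n) => m k IH.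
exact: psd_update.
Qed.

Lemma post_diag_le n a : kn n.+1 a a <= kn n a a.
Proof.
rewrite kn_S gerBl; have [sym _] := post_psd n.
rewrite (sym (xs n) a) -expr2 divr_ge0 ?sqr_ge0 //.
by rewrite addr_ge0 ?sqr_ge0 ?psd_diag //; exact: post_psd.
Qed.

Lemma post_diag_le0 n a : kn n a a <= k0 a a.
Proof.
elim: n => [//|n IH]; exact: le_trans (post_diag_le n a) IH.
Qed.

Lemma post_diag_mono n m a : (n <= m)%N -> kn m a a <= kn n a a.
Proof.
move/subnK <-; elim: (m - n)%N => [|j IH]; first by rewrite add0n.
by rewrite addSn; exact: le_trans (post_diag_le _ a) IH.
Qed.

Lemma post_sample n (c : R) : 0 <= c -> kn n (xs n) (xs n) * c <= s0 ^+ 2 ->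
  kn n.+1 (xs n) (xs n) * (c + 1) <= s0 ^+ 2.
Proof.
move=> c0 h; rewrite kn_S.
set v := kn n (xs n) (xs n) in h *.
have v0 : 0 <= v by apply: psd_diag; exact: post_psd.
have s2 : 0 < s0 ^+ 2 by exact: exprn_gt0.
have dn : v + s0 ^+ 2 != 0 by apply: lt0r_neq0; exact: ltr_wpDl.
have -> : v - v * v / (v + s0 ^+ 2) = v * s0 ^+ 2 / (v + s0 ^+ 2).
  by field.
rewrite mulrAC ler_pdivrMr; last exact: ltr_wpDl.
nra.
Qed.

Lemma post_count (x : X) : (forall N, exists m, (N <= m)%N /\ xs m = x) ->
  forall c : nat, exists N, forall n, (N <= n)%N -> kn n x x * c%:R <= s0 ^+ 2.
Proof.
move=> inf; elim=> [|c [N HN]].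
  by exists 0%N => n _; rewrite mulr0 sqr_ge0.
have [m [Nm xm]] := inf N.
exists m.+1 => n mn.
have := HN m Nm; rewrite -xm => /(post_sample (ler0n _ c)) h.
rewrite xm -natr1.
apply: le_trans h; apply: ler_wpM2r; first by rewrite addr_ge0.
by rewrite xm; exact: post_diag_mono mn.
Qed.

End Ker.

Section Int.
Context {R : realType}.
Local Notation mu := (@lebesgue_measure R).
Local Notation P := (@normal_prob R 0 1).
Local Notation phi := (@normal_pdf R 0 1).
Local Open Scope ereal_scope.

Lemma dens_ge0 (g : R -> \bar R) : (forall x, 0 <= g x) -> measurable_fun [set: R] g ->
  \int[P]_(x in [set: R]) g x = \int[mu]_(x in [set: R]) (g x * (phi x)%:E).
Proof.
move=> g0 mg.
have dom := @normal_prob_dominates R 0 1.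
rewrite -(Radon_Nikodym_SigmaFinite.change_of_variables dom) //.
apply: ge0_ae_eq_integral => //.
- apply: emeasurable_funM => //.
  apply: measurable_int.
  exact: Radon_Nikodym_SigmaFinite.f_integrable.
- apply: emeasurable_funM => //; apply/measurable_EFinP.
  exact: measurable_normal_pdf.
- by move=> x _; rewrite mule_ge0 // Radon_Nikodym_SigmaFinite.f_ge0.
- by move=> x _; rewrite mule_ge0 // lee_fin normal_pdf_ge0.
- apply: ae_eqe_mul2l.
  apply: integral_ae_eq => //.
  + exact: Radon_Nikodym_SigmaFinite.f_integrable.
  + apply/measurable_EFinP; exact: measurable_normal_pdf.
  + move=> E _ mE; rewrite -Radon_Nikodym_SigmaFinite.f_integral //.
Qed.

Lemma split_sym (g : R -> R) : (forall x, 0 <= g x)%R -> continuous g ->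
  \int[mu]_x (g x)%:E = \int[mu]_(x in [set x | (0 <= x)%R]) (g x)%:E
     + \int[mu]_(x in [set x | (0 <= x)%R]) (g (- x)%R)%:E.
Proof.
move=> f0 cf.
have mf : measurable_fun [set: R] g by exact: continuous_measurable_fun.
have mposnums : measurable [set x : R | 0 <= x]%R by rewrite -set_itvcy.
rewrite -(setUv [set x : R | 0 <= x]%R) ge0_integral_setU//= ; last 4 first.
  exact: measurableC.
  by apply/measurable_EFinP; rewrite setUv.
  by move=> x _; rewrite lee_fin.
  exact/disj_setPCl.
congr +%E.
rewrite -set_itvcy// setCitvr.
rewrite integral_itv_bndo_bndc; last exact/measurable_EFinP/measurable_funTS.
rewrite -{1}oppr0 ge0_integration_by_substitutionNy//.
exact: continuous_subspaceT.
Qed.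

Lemma int_sym (g : R -> R) : (forall x, 0 <= g x)%R -> continuous g ->
  \int[mu]_x (g x)%:E = \int[mu]_x (g (- x)%R)%:E.
Proof.
move=> g0 cg.
have cg' : continuous (fun x => g (- x)%R).
  move=> x; apply: continuous_comp; last exact: cg.
  exact: continuousN.
rewrite split_sym // (split_sym (g := fun x => g (- x)%R)) //.
rewrite addeC; congr +%E; apply: eq_integral => x _; by rewrite opprK.
Qed.

Lemma pdfE (s : R) (x : R) : (s != 0)%R ->
  normal_pdf 0 s x = (normal_peak s * expR (- x ^+ 2 / (s ^+ 2 *+ 2)))%R.
Proof. by move=> s0; rewrite normal_pdfE // /normal_fun subr0. Qed.

Lemma abs_bound (x : R) : (`|x| * expR (- x ^+ 2 / 2) <= expR (- x ^+ 2 / 8))%R.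
Proof.
have -> : (- x ^+ 2 / 8 = - x ^+ 2 / 2 + 3 * x ^+ 2 / 8)%R by field.
rewrite expRD mulrC ler_pM2l ?expR_gt0 //.
apply: le_trans (expR_ge1Dx _).
have h : (0 <= (`|x| / 2 - 1) ^+ 2)%R by exact: sqr_ge0.
have hx : (x ^+ 2 = `|x| ^+ 2)%R by rewrite real_normK // num_real.
rewrite hx; nra.
Qed.

Lemma measurable_abs : measurable_fun [set: R] (fun x : R => `|x|%R).
Proof. exact: normr_measurable. Qed.

Lemma abs_int_le : \int[P]_(x in [set: R]) (`|x|%R)%:E <=
   (normal_peak 1 / normal_peak 2)%:E.
Proof.
rewrite dens_ge0 //; last by apply/measurable_EFinP; exact: measurable_abs.
have p2 : (0 < normal_peak (2 : R))%R by apply: normal_peak_gt0.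
apply: (@le_trans _ _ (\int[mu]_(x in [set: R]) ((normal_peak 1 / normal_peak 2)%:E
     * (normal_pdf 0 2 x)%:E))).
  apply: ge0_le_integral => //.
  - by move=> x _; rewrite -EFinM lee_fin mulr_ge0 // normal_pdf_ge0.
  - apply: emeasurable_funM; [apply/measurable_EFinP; exact: measurable_abs | apply/measurable_EFinP; exact: measurable_normal_pdf].
  - apply: emeasurable_funM; apply/measurable_EFinP => //; exact: measurable_normal_pdf.
  - move=> x _; rewrite -!EFinM lee_fin !pdfE //.
    have e1 : ((1 : R) ^+ 2 *+ 2 = 2)%R by rewrite expr1n.
    have e2 : ((2 : R) ^+ 2 *+ 2 = 8)%R by rewrite -mulr_natr; lra.
    rewrite e1 e2.
    have -> : (normal_peak 1 / normal_peak 2 * (normal_peak 2 * expR (- x ^+ 2 / 8))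
       = normal_peak 1 * expR (- x ^+ 2 / 8))%R.
      by field; rewrite gt_eqF.
    rewrite mulrCA ler_pM2l ?normal_peak_gt0 ?oner_neq0 //.
    exact: abs_bound.
rewrite ge0_integralZl //.
- by rewrite integral_normal_pdf mule1.
- apply/measurable_EFinP; exact: measurable_normal_pdf.
- by move=> x _; rewrite lee_fin normal_pdf_ge0.
- by rewrite lee_fin divr_ge0 // ltW // normal_peak_gt0 ?oner_neq0.
Qed.

Lemma phiN (x : R) : phi (- x) = phi x.
Proof. by rewrite !pdfE ?oner_neq0 // sqrrN. Qed.

Lemma measurable_id' : measurable_fun [set: R] (fun x : R => x).
Proof. exact: measurable_id. Qed.

Lemma abs_integrable : P.-integrable [set: R] (fun x => (`|x|%R)%:E).
Proof.
apply/integrableP; split; first by apply/measurable_EFinP; exact: measurable_abs.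
under eq_integral do rewrite abse_EFin normr_id.
exact: le_lt_trans abs_int_le (ltry _).
Qed.

Lemma id_integrable : P.-integrable [set: R] (fun x => x%:E).
Proof.
apply: le_integrable abs_integrable => //.
  by apply/measurable_EFinP; exact: measurable_id'.
by move=> x _; rewrite /= normr_id.
Qed.

Lemma mean0 : \int[P]_(x in [set: R]) x%:E = 0.
Proof.
pose ap := fun x : R => ((`|x| + x) / 2)%R.
pose an := fun x : R => ((`|x| - x) / 2)%R.
have hN (x : R) : (- x <= `|x|)%R by have := ler_norm (-x); rewrite normrN.
have hP (x : R) : (x <= `|x|)%R := ler_norm x.
have ap0 (x : R) : (0 <= ap x)%R by rewrite /ap; have := hN x; lra.
have an0 (x : R) : (0 <= an x)%R by rewrite /an; have := hP x; lra.
have mabs := measurable_abs.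
have map : measurable_fun [set: R] ap.
  by apply: measurable_funM => //; apply: measurable_funD => //; exact: measurable_id'.
have man : measurable_fun [set: R] an.
  by apply: measurable_funM => //; apply: measurable_funB => //; exact: measurable_id'.
have iap : P.-integrable [set: R] (fun x => (ap x)%:E).
  apply: le_integrable abs_integrable => //; first exact/measurable_EFinP.
  move=> x _; rewrite /= normr_id lee_fin ger0_norm //.
  by rewrite /ap; have := hN x; have := hP x; lra.
have ian : P.-integrable [set: R] (fun x => (an x)%:E).
  apply: le_integrable abs_integrable => //; first exact/measurable_EFinP.
  move=> x _; rewrite /= normr_id lee_fin ger0_norm //.
  by rewrite /an; have := hN x; have := hP x; lra.
have -> : \int[P]_(x in [set: R]) x%:E =
    \int[P]_(x in [set: R]) ((fun x => (ap x)%:E) \- (fun x => (an x)%:E)) x.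
  by apply: eq_integral => x _; rewrite /= -EFinB /ap /an; congr EFin; lra.
rewrite integralB //.
have -> : \int[P]_(x in [set: R]) (ap x)%:E = \int[P]_(x in [set: R]) (an x)%:E.
  rewrite !dens_ge0 //; [|exact/measurable_EFinP|exact/measurable_EFinP].
  under eq_integral do rewrite -EFinM.
  rewrite (int_sym (g := fun x => ap x * phi x)%R).
  + by apply: eq_integral => x _; rewrite -EFinM phiN /ap /an normrN.
  + by move=> x; rewrite mulr_ge0 // normal_pdf_ge0.
  + move=> x; apply: continuousM; last exact: continuous_normal_pdf (oner_neq0 _) x.
    apply: continuousM; last exact: cvg_cst.
    apply: continuousD; [exact: norm_continuous | exact: cvg_id].
rewrite subee //; exact: integrable_fin_num.
Qed.

Lemma PsetT : P [set: R] = 1.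
Proof. exact: probability_setT. Qed.

Lemma cst_integrable (c : R) : P.-integrable [set: R] (fun _ => c%:E).
Proof. exact: (finite_measure_integrable_cst _ c). Qed.

Lemma int_cst (c : R) : \int[P]_(x in [set: R]) c%:E = c%:E.
Proof. rewrite (integral_cst P measurableT c%:E).
change (c%:E * P [set: R] = c%:E); by rewrite PsetT mule1. Qed.

Lemma lin_integrable (c d : R) : P.-integrable [set: R] (fun z => (c + d * z)%R%:E).
Proof.
apply: (@eq_integrable _ _ _ _ _ measurableT _ _ _
  (integrableD measurableT (cst_integrable c) (integrableZl measurableT d id_integrable))).
by move=> z _; rewrite /= EFinD EFinM.
Qed.

Lemma lin_int (c d : R) : \int[P]_(x in [set: R]) (c + d * x)%R%:E = c%:E.
Proof.
under eq_integral do rewrite EFinD EFinM.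
rewrite integralD //; [|exact: cst_integrable|apply: integrableZl => //; exact: id_integrable].
by rewrite integralZl //; [rewrite mean0 mule0 adde0 int_cst|exact: id_integrable].
Qed.

Lemma abs_lin_integrable (c d : R) : P.-integrable [set: R] (fun z => (c + d * `|z|)%R%:E).
Proof.
apply: (@eq_integrable _ _ _ _ _ measurableT _ _ _
  (integrableD measurableT (cst_integrable c) (integrableZl measurableT d abs_integrable))).
by move=> z _; rewrite /= EFinD EFinM.
Qed.

Lemma abs_lin_int (c d : R) : (0 <= d)%R ->
  \int[P]_(x in [set: R]) (c + d * `|x|)%R%:E <= (c + d * (normal_peak 1 / normal_peak 2))%R%:E.
Proof.
move=> d0.
under eq_integral do rewrite EFinD EFinM.
rewrite integralD //; [|exact: cst_integrable|apply: integrableZl => //; exact: abs_integrable].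
rewrite integralZl //; last exact: abs_integrable.
rewrite int_cst EFinD EFinM leeD2l //.
by apply: lee_wpmul2l; [rewrite lee_fin|exact: abs_int_le].
Qed.

Lemma absbound (a0 f bz c : R) : (a0 + bz <= f -> f <= a0 + c -> `|bz| <= c ->
  `|f| <= `|a0| + c)%R.
Proof.
move=> l u hb.
have h1 := ler_norm bz; have h2 := ler_norm (- bz).
have h3 := ler_norm a0; have h4 := ler_norm (- a0).
rewrite normrN in h2; rewrite normrN in h4.
rewrite ler_norml; apply/andP; split; lra.
Qed.

Lemma meas_bigmax (I : Type) (r : seq I) (f : I -> R -> \bar R) :
  (forall j, measurable_fun [set: R] (f j)) ->
  measurable_fun [set: R] (fun z => \big[Order.max/-oo]_(j <- r) f j z).
Proof.
move=> mf; elim: r => [|j r IH].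
  by under eq_fun do rewrite big_nil; exact: measurable_cst.
under eq_fun do rewrite big_cons.
exact: measurable_maxe.
Qed.

Definition Cabs : R := (normal_peak 1 / normal_peak 2)%R.

Lemma Cabs_ge0 : (0 <= Cabs)%R.
Proof. by rewrite /Cabs divr_ge0 // ltW // normal_peak_gt0 // ?oner_neq0. Qed.

Lemma kg_bounds (nz : nat) (a b : 'I_nz -> R) (S : R) : (0 < nz)%N ->
  (forall j, `|b j| <= S)%R ->
  0 <= \int[P]_(z in [set: R]) \big[Order.max/-oo]_(j < nz) (a j + b j * z)%R%:E
        - \big[Order.max/-oo]_(j < nz) (a j)%:E /\
  \int[P]_(z in [set: R]) \big[Order.max/-oo]_(j < nz) (a j + b j * z)%R%:E
        - \big[Order.max/-oo]_(j < nz) (a j)%:E <= (S * Cabs)%:E.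
Proof.
move=> nz0 hS.
pose i0 : 'I_nz := Ordinal nz0.
have [j0 _ Mj0] := @eq_bigmax _ _ _ -oo i0 predT (fun j => (a j)%:E) isT
   (fun i _ => leNye _).
rewrite Mj0.
have aj j : (a j <= a j0)%R.
  by rewrite -lee_fin -Mj0; exact: le_bigmax.
set F := fun z => \big[Order.max/-oo]_(j < nz) (a j + b j * z)%R%:E.
have S0 : (0 <= S)%R by exact: le_trans (normr_ge0 _) (hS i0).
have lowF z : ((a j0 + b j0 * z)%R%:E <= F z).
  exact: le_bigmax.
have upF z : (F z <= (a j0 + S * `|z|)%R%:E).
  apply: bigmax_le => [|j _]; first exact: leNye.
  rewrite lee_fin; apply: lerD; first exact: aj.
  apply: le_trans (ler_norm _) _; rewrite normrM ler_wpM2r //.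
have [ff Fff] : exists ff : R -> R, forall z, F z = (ff z)%:E.
  exists (fun z => fine (F z)) => z.
  have [jz _ e] := @eq_bigmax _ _ _ -oo i0 predT (fun j => (a j + b j * z)%R%:E) isT
     (fun i _ => leNye _).
  have e' : F z = (a jz + b jz * z)%R%:E by exact: e.
  by rewrite e'.
have mF : measurable_fun [set: R] F.
  apply: meas_bigmax => j; apply/measurable_EFinP.
  apply: measurable_funD => //; apply: measurable_funM => //; exact: measurable_id'.
have iF : P.-integrable [set: R] F.
  apply: le_integrable (abs_lin_integrable `|a j0| S) => //.
  move=> z _; rewrite Fff /= lee_fin.
  have l := lowF z; have u := upF z; rewrite Fff lee_fin in l; rewrite Fff lee_fin in u.
  have hb : (`|b j0 * z| <= S * `|z|)%R by rewrite normrM ler_wpM2r.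
  have hz : (0 <= S * `|z|)%R by rewrite mulr_ge0.
  rewrite [X in (_ <= X)%R]ger0_norm; last by rewrite addr_ge0.
  exact: absbound l u hb.
have fin_int : \int[P]_(z in [set: R]) F z \is a fin_num by exact: integrable_fin_num.
split.
  rewrite sube_ge0 ?fin_int //.
  rewrite -(lin_int (a j0) (b j0)).
  by apply: le_integral => //; first exact: lin_integrable.
rewrite leeBlDl // -EFinD.
rewrite /Cabs; apply: le_trans; last exact: abs_lin_int.
apply: le_integral => //.
  exact: (abs_lin_integrable (a j0) S).
by move=> z _; exact: upF.
Qed.
End Int.

Lemma sigt_bound {R : realType} {X : Type} (k : X -> X -> R) (s0 : R) (x x' : X) (B : R) :
  psd_kernel k -> 0 < s0 -> k x' x' <= B ->
  `|sigt k s0 x x'| ^+ 2 <= B * k x x / s0 ^+ 2.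
Proof.
move=> hk s0p hB.
have vx := psd_diag x hk; have vx' := psd_diag x' hk.
have cs := psd_cs x' x hk.
have s2 : 0 < s0 ^+ 2 by exact: exprn_gt0.
have d0 : 0 < k x x + s0 ^+ 2 by exact: ltr_wpDl.
rewrite /sigt real_normK ?num_real // exprMn exprVn sqr_sqrtr; last exact: ltW.
rewrite ler_pdivlMr // mulrAC ler_pdivrMr //.
have h1 : k x' x ^+ 2 * s0 ^+ 2 <= k x' x' * k x x * s0 ^+ 2 by rewrite ler_wpM2r // ltW.
apply: le_trans h1 _.
have h2 : k x' x' * k x x <= B * k x x by rewrite ler_wpM2r.
have h3 : 0 <= B * k x x by apply: le_trans h2; rewrite mulr_ge0.
nra.
Qed.

Lemma exists_S {R : realType} (n : nat) (b : 'I_n -> R) : exists S, forall j, `|b j| <= S.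
Proof.
exists (\sum_(i < n) `|b i|) => j.
by rewrite (bigD1 j) //= lerDl sumr_ge0.
Qed.

Theorem theorem3 (R : realType) (X : Type) (mu0 : X -> R) (k0 : X -> X -> R)
  (s0 : R) (nz : nat) (Zs : 'I_nz -> R) (xseq : nat -> X) (yseq : nat -> R) :
  0 < s0 ->
  psd_kernel k0 ->
  (exists B : R, forall x : X, k0 x x <= B) ->
  (1 < nz)%N ->
  injective Zs ->
  (exists j, Zs j = 0) ->
  (* (i) nonnegativity, for every n, every candidate x and every choice of maximizers *)
  (forall (n : nat) (x : X) (xstar : 'I_nz -> X),
     (forall j, is_argmax (gp_post mu0 k0 s0 xseq yseq n).1
                          (gp_post mu0 k0 s0 xseq yseq n).2 s0 x (Zs j) (xstar j)) ->
     (0 <= KGh (gp_post mu0 k0 s0 xseq yseq n).1 (gp_post mu0 k0 s0 xseq yseq n).2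
               s0 xstar x)%E)
  /\
  (* (ii) if x is sampled infinitely often, KG_h at x tends to 0 *)
  (forall (x : X) (xstar : nat -> 'I_nz -> X),
     (forall N, exists m, (N <= m)%N /\ xseq m = x) ->
     (forall n j, is_argmax (gp_post mu0 k0 s0 xseq yseq n).1
                            (gp_post mu0 k0 s0 xseq yseq n).2 s0 x (Zs j) (xstar n j)) ->
     (fun n => KGh (gp_post mu0 k0 s0 xseq yseq n).1 (gp_post mu0 k0 s0 xseq yseq n).2
                   s0 (xstar n) x) @ \oo --> 0%E).
Proof.
move=> s0p hk0 [B hB] nz1 _ _.
have nz0 : (0 < nz)%N by exact: ltnW.
split.
  move=> n x xstar _.
  have [S hS] := exists_S (fun j => sigt (gp_post mu0 k0 s0 xseq yseq n).2 s0 x (xstar j)).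
  exact: (kg_bounds (fun j => (gp_post mu0 k0 s0 xseq yseq n).1 (xstar j)) nz0 hS).1.
move=> x xstar inf _.
set KG := fun n => KGh _ _ _ _ _.
have B0 : 0 <= B by apply: le_trans (hB x); exact: psd_diag.
have bnd n S : (forall j, `|sigt (gp_post mu0 k0 s0 xseq yseq n).2 s0 x (xstar n j)| <= S) ->
    (0 <= KG n)%E /\ (KG n <= (S * Cabs)%:E)%E.
  move=> hS.
  exact: (kg_bounds (fun j => (gp_post mu0 k0 s0 xseq yseq n).1 (xstar n j)) nz0 hS).
have finKG n : KG n \is a fin_num.
  have [S hS] := exists_S (fun j => sigt (gp_post mu0 k0 s0 xseq yseq n).2 s0 x (xstar n j)).
  have [h1 h2] := bnd n S hS.
  by rewrite ge0_fin_numE //; apply: le_lt_trans h2 (ltry _).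
apply/fine_cvgP; split.
  by apply: nearW => n; exact: finKG.
apply/cvgrPdist_le => eps eps0.
have C0 := Cabs_ge0 (R := R).
pose T := eps / (Cabs + 1).
have T0 : 0 < T by rewrite /T divr_gt0 // ltr_wpDl.
have TC : T * Cabs <= eps.
  rewrite /T mulrAC ler_pdivrMr ?ltr_wpDl // ler_pM2l //; lra.
pose c := (Num.truncn (B / T ^+ 2)).+1.
have hc : B <= c%:R * T ^+ 2.
  have := Num.Theory.truncnS_gt (B / T ^+ 2).
  rewrite ltr_pdivrMr ?exprn_gt0 // => h; exact: ltW.
have [N HN] := post_count mu0 yseq s0p hk0 inf c.
exists N => // n /= Nn.
have v0 : 0 <= (gp_post mu0 k0 s0 xseq yseq n).2 x x by apply: psd_diag; exact: post_psd.
have hv := HN n Nn.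
have hS : forall j, `|sigt (gp_post mu0 k0 s0 xseq yseq n).2 s0 x (xstar n j)| <= T.
  move=> j.
  have hk := post_psd mu0 xseq yseq s0p hk0 n.
  have hx' : (gp_post mu0 k0 s0 xseq yseq n).2 (xstar n j) (xstar n j) <= B.
    exact: le_trans (post_diag_le0 mu0 xseq yseq s0p hk0 n _) (hB _).
  have h := sigt_bound x hk s0p hx'.
  have s2 : 0 < s0 ^+ 2 by exact: exprn_gt0.
  have h' : B * (gp_post mu0 k0 s0 xseq yseq n).2 x x / s0 ^+ 2 <= T ^+ 2.
    rewrite ler_pdivrMr //.
    apply: le_trans (ler_wpM2r v0 hc) _.
    have t2 : 0 <= T ^+ 2 by exact: exprn_ge0 (ltW T0).
    rewrite mulrAC [X in _ <= X]mulrC; apply: ler_wpM2r => //.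
    by rewrite mulrC.
  have := le_trans h h'.
  have n0 := normr_ge0 (sigt (gp_post mu0 k0 s0 xseq yseq n).2 s0 x (xstar n j)).
  move: n0; set w := `|_|; move=> n0 hw; nra.
have [h1 h2] := bnd n T hS.
rewrite sub0r normrN /= ger0_norm; last by rewrite fine_ge0.
apply: le_trans TC.
by rewrite -lee_fin fineK.
Qed.
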